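(* Let the data $y\in\mathbb{R}^n$, $X\in\mathbb{R}^{n\times p}$, $Z\in\mathbb{R}^{n\times q}$ be fixed, with $Z^TZ$ and $X^TP_ZX$ non-singular, and thin SVDs $X=U_X\Sigma_XV_X^T$, $Z=U_Z\Sigma_ZV_Z^T$. Let $\widehat e=y-X\widehat\beta_{2SLS}$ with $\widehat\beta_{2SLS}=(X^TP_ZX)^{-1}X^TP_Zy$, and let $\Pi\in\mathbb{R}^{m\times n}$ be random. Given $\varepsilon_1,\varepsilon_2,\varepsilon_3,\delta\in(0,1/2)$, suppose that jointly with probability at least $1-\delta$: $\|U_Z^T\Pi^T\Pi U_Z-I_q\|_2\le\varepsilon_1$, $\|U_Z^T\Pi^T\Pi U_X-U_Z^TU_X\|_2\le\varepsilon_2$, $\|U_Z^T\Pi^T\Pi\widehat e-U_Z^T\widehat e\|\le\varepsilon_3\|\widehat e\|$; and that $\sigma_{\min}^2(U_Z^TU_X)\ge 2f_1(\varepsilon_1,\varepsilon_2)$. Let $\widetilde A:=U_X^T\Pi^T\Pi U_Z(U_Z^T\Pi^T\Pi U_Z)^{-1}U_Z^T\Pi^T\Pi U_X$ and $\widehat A:=U_X^TU_ZU_Z^TU_X$. Then with probability at least $1-\delta$, $$\|\widetilde A^{-1}-\widehat A^{-1}\|_2\le\frac{2f_1(\varepsilon_1,\varepsilon_2)}{\sigma_{\min}^4(U_Z^TU_X)}.$$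
   Context: $P_Z=Z(Z^TZ)^{-1}Z^T$; $f_1(\varepsilon_1,\varepsilon_2):=[\varepsilon_1+\varepsilon_2(\varepsilon_2+2)]/(1-\varepsilon_1)$. $\|\cdot\|_2$ is the spectral norm, $\sigma_{\min}$ the smallest singular value. *)

(* Defs.v *)
From HB Require Import structures.
From mathcomp Require Import all_boot all_order all_algebra.
From mathcomp Require Import all_classical all_reals all_analysis.
Set Implicit Arguments. Unset Strict Implicit. Unset Printing Implicit Defensive.
Import Order.TTheory GRing.Theory Num.Theory.
Local Open Scope classical_set_scope.
Local Open Scope ring_scope.

Definition vnorm {R : realType} {n : nat} (v : 'cV[R]_n) : R :=
  Num.sqrt (\sum_(i < n) v i 0 ^+ 2).

Definition spec_norm {R : realType} {m n : nat} (A : 'M[R]_(m, n)) : R :=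
  sup [set vnorm (A *m x) | x in [set x : 'cV[R]_n | vnorm x <= 1]].

Definition sigma_min {R : realType} {m n : nat} (A : 'M[R]_(m, n)) : R :=
  inf [set vnorm (A *m x) | x in [set x : 'cV[R]_n | vnorm x = 1]].

Definition projmx {R : realType} {n q : nat} (Z : 'M[R]_(n, q)) : 'M[R]_n :=
  Z *m invmx (Z^T *m Z) *m Z^T.

Definition f1 {R : realType} (e1 e2 : R) : R :=
  (e1 + e2 * (e2 + 2)) / (1 - e1).

Definition thin_svd {R : realType} {n r : nat} (A : 'M[R]_(n, r))
    (U : 'M[R]_(n, r)) (S : 'M[R]_r) (V : 'M[R]_r) : Prop :=
  [/\ A = U *m S *m V^T, U^T *m U = 1%:M, V^T *m V = 1%:M,
      is_diag_mx S & forall i, 0 <= S i i].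

(* Main.v *)
Require Import Defs.
From HB Require Import structures.
From mathcomp Require Import all_boot all_order all_algebra.
From mathcomp Require Import all_classical all_reals all_analysis.
From mathcomp Require Import ring lra.
Import Order.TTheory GRing.Theory Num.Theory.
Local Open Scope classical_set_scope.
Local Open Scope ring_scope.

Section Aux.
Context {R : realType}.

Definition dot {n} (u v : 'cV[R]_n) : R := (u^T *m v) 0 0.

Lemma dotE {n} (u v : 'cV[R]_n) : dot u v = \sum_i u i 0 * v i 0.
Proof. by rewrite /dot mxE; apply: eq_bigr => i _; rewrite mxE. Qed.

Lemma dotC {n} (u v : 'cV[R]_n) : dot u v = dot v u.
Proof. rewrite !dotE; apply: eq_bigr => i _; exact: mulrC. Qed.

Lemma dotDr {n} (u v w : 'cV[R]_n) : dot u (v + w) = dot u v + dot u w.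
Proof. by rewrite /dot mulmxDr mxE. Qed.

Lemma dotNr {n} (u v : 'cV[R]_n) : dot u (- v) = - dot u v.
Proof. by rewrite /dot mulmxN mxE. Qed.

Lemma dotBr {n} (u v w : 'cV[R]_n) : dot u (v - w) = dot u v - dot u w.
Proof. by rewrite dotDr dotNr. Qed.

Lemma dotZr {n} a (u v : 'cV[R]_n) : dot u (a *: v) = a * dot u v.
Proof. by rewrite /dot -scalemxAr mxE. Qed.

Lemma dotDl {n} (u v w : 'cV[R]_n) : dot (v + w) u = dot v u + dot w u.
Proof. by rewrite dotC dotDr !(dotC u). Qed.
Lemma dotBl {n} (u v w : 'cV[R]_n) : dot (v - w) u = dot v u - dot w u.
Proof. by rewrite dotC dotBr !(dotC u). Qed.
Lemma dotZl {n} a (u v : 'cV[R]_n) : dot (a *: v) u = a * dot v u.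
Proof. by rewrite dotC dotZr dotC. Qed.

Lemma dot_mul {n m} (A : 'M[R]_(n, m)) u v : dot u (A *m v) = dot (A^T *m u) v.
Proof. by rewrite /dot trmx_mul trmxK mulmxA. Qed.

Lemma dot_ge0 {n} (u : 'cV[R]_n) : 0 <= dot u u.
Proof. rewrite dotE; apply: sumr_ge0 => i _; exact: mulr_ge0_le0 || exact: sqr_ge0. Qed.

Lemma dot_eq0 {n} (u : 'cV[R]_n) : dot u u = 0 -> u = 0.
Proof.
rewrite dotE => /eqP; rewrite psumr_eq0; last by move=> i _; rewrite -expr2 sqr_ge0.
move=> /allP H; apply/matrixP => i j; rewrite (ord1 j) mxE.
have := H i (mem_index_enum _); rewrite implyTb mulf_eq0 orbb => /eqP //.
Qed.

Lemma vnormE {n} (u : 'cV[R]_n) : vnorm u = Num.sqrt (dot u u).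
Proof. by rewrite /vnorm dotE; congr Num.sqrt; apply: eq_bigr => i _; rewrite expr2. Qed.

Lemma vnorm_ge0 {n} (u : 'cV[R]_n) : 0 <= vnorm u.
Proof. by rewrite vnormE sqrtr_ge0. Qed.

Lemma vnorm_sq {n} (u : 'cV[R]_n) : vnorm u ^+ 2 = dot u u.
Proof. by rewrite vnormE sqr_sqrtr // dot_ge0. Qed.

Lemma vnorm_le {n} (u : 'cV[R]_n) c : 0 <= c -> dot u u <= c ^+ 2 -> vnorm u <= c.
Proof.
move=> c0 h; rewrite vnormE -(ger0_norm c0) -sqrtr_sqr.
by rewrite ler_sqrt // sqr_ge0.
Qed.

Lemma CS {n} (u v : 'cV[R]_n) : dot u v ^+ 2 <= dot u u * dot v v.
Proof.
have [v0|vn0] := eqVneq (dot v v) 0.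
  by rewrite v0 (dot_eq0 _ v0) /dot mulmx0 mxE expr0n /= mulr0.
have h := dot_ge0 (dot v v *: u - dot u v *: v).
rewrite !(dotBl, dotBr, dotZl, dotZr) (dotC v u) in h.
have vp : 0 < dot v v by rewrite lt0r vn0 dot_ge0.
have : 0 <= dot v v * (dot v v * dot u u - dot u v ^+ 2) by nra.
rewrite pmulr_rge0 // subr_ge0 => h2; nra.
Qed.

Lemma CS_norm {n} (u v : 'cV[R]_n) : dot u v <= vnorm u * vnorm v.
Proof.
have h := CS u v.
have a := vnorm_ge0 u; have b := vnorm_ge0 v.
have : dot u v ^+ 2 <= (vnorm u * vnorm v) ^+ 2 by rewrite exprMn !vnorm_sq.
have : 0 <= vnorm u * vnorm v by rewrite mulr_ge0.
move: (vnorm u * vnorm v) (dot u v) => N d N0 hh.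
rewrite leNgt; apply/negP => hd.
have : N ^+ 2 < d ^+ 2 by rewrite ltr_pXn2r // ?nnegrE //; apply: le_trans (ltW hd).
by rewrite ltNge hh.
Qed.

Lemma vnormD {n} (u v : 'cV[R]_n) : vnorm (u + v) <= vnorm u + vnorm v.
Proof.
apply: vnorm_le; first by rewrite addr_ge0 ?vnorm_ge0.
rewrite !(dotDl, dotDr) (dotC v u) -!vnorm_sq.
have := CS_norm u v; nra.
Qed.

Lemma vnormN {n} (u : 'cV[R]_n) : vnorm (- u) = vnorm u.
Proof. by rewrite !vnormE dotNr /dot linearN /= mulNmx mxE opprK. Qed.

Lemma vnormZ {n} a (u : 'cV[R]_n) : vnorm (a *: u) = `|a| * vnorm u.
Proof. by rewrite !vnormE dotZl dotZr mulrA -expr2 sqrtrM ?sqr_ge0 // sqrtr_sqr. Qed.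

Lemma vnorm0 {n} : vnorm (0 : 'cV[R]_n) = 0.
Proof. by rewrite vnormE /dot mulmx0 mxE sqrtr0. Qed.

Lemma vnorm_eq0 {n} (u : 'cV[R]_n) : vnorm u = 0 -> u = 0.
Proof. by rewrite vnormE => /eqP; rewrite sqrtr_eq0 => h; apply: dot_eq0; apply/eqP; rewrite eq_le h dot_ge0. Qed.


Definition bnd {m n} (A : 'M[R]_(m, n)) c := forall x, vnorm (A *m x) <= c * vnorm x.

Lemma bnd_mono {m n} (A : 'M[R]_(m, n)) a b : a <= b -> bnd A a -> bnd A b.
Proof. move=> ab h x; apply: le_trans (h x) _; by rewrite ler_wpM2r ?vnorm_ge0. Qed.

Lemma bndD {m n} (A B : 'M[R]_(m, n)) a b : bnd A a -> bnd B b -> bnd (A + B) (a + b).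
Proof. move=> ha hb x; rewrite mulmxDl mulrDl; apply: le_trans (vnormD _ _) _; exact: lerD. Qed.

Lemma bndN {m n} (A : 'M[R]_(m, n)) a : bnd A a -> bnd (- A) a.
Proof. by move=> ha x; rewrite mulNmx vnormN. Qed.

Lemma bndB {m n} (A B : 'M[R]_(m, n)) a b : bnd A a -> bnd B b -> bnd (A - B) (a + b).
Proof. by move=> ha hb; apply: bndD => //; exact: bndN. Qed.

Lemma bndM {m n k} (A : 'M[R]_(m, n)) (B : 'M[R]_(n, k)) a b : 0 <= a -> bnd A a -> bnd B b -> bnd (A *m B) (a * b).
Proof. move=> a0 ha hb x; rewrite -mulmxA -mulrA; apply: le_trans (ha _) _; exact: ler_wpM2l. Qed.

Lemma bnd_ge0 {m n} (A : 'M[R]_(m, n)) a x : bnd A a -> vnorm x * a <= vnorm (A *m x) -> True.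
Proof. by []. Qed.

Lemma bndT {m n} (A : 'M[R]_(m, n)) c : 0 <= c -> bnd A c -> bnd A^T c.
Proof.
move=> c0 h y; set z := A^T *m y.
have e : vnorm z ^+ 2 <= c * vnorm y * vnorm z.
  rewrite vnorm_sq {1}/z -dot_mul.
  apply: le_trans (CS_norm _ _) _.
  rewrite (mulrC c) -mulrA ler_wpM2l ?vnorm_ge0 // mulrC; exact: h.
have z0 := vnorm_ge0 z; have y0 := vnorm_ge0 y.
have [zz|zp] := eqVneq (vnorm z) 0; first by rewrite zz mulr_ge0.
have zpos : 0 < vnorm z by rewrite lt0r zp z0.
by rewrite -(ler_pM2r zpos) -expr2.
Qed.

Definition lb {n} (A : 'M[R]_n) c := forall x, c * vnorm x <= vnorm (A *m x).

Lemma lb_unit {n} (A : 'M[R]_n) c : 0 < c -> lb A c -> A \in unitmx.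
Proof.
move=> c0 h; rewrite -unitmx_tr -row_free_unit -kermx_eq0; apply/eqP.
apply/row_matrixP => i; rewrite row0.
have : row i (kermx A^T) *m A^T = 0 by apply/sub_kermxP; exact: row_sub.
move=> /(congr1 trmx); rewrite trmx_mul trmxK trmx0 => e.
have := h (row i (kermx A^T))^T; rewrite e vnorm0 => hh.
have : vnorm (row i (kermx A^T))^T = 0.
  apply/eqP; rewrite eq_le vnorm_ge0 andbT -(pmulr_rle0 _ c0); exact: hh.
by move=> /vnorm_eq0 /(congr1 trmx); rewrite trmxK trmx0.
Qed.

Lemma lb_inv {n} (A : 'M[R]_n) c : 0 < c -> lb A c -> bnd (invmx A) c^-1.
Proof.
move=> c0 h y; have u := lb_unit A c c0 h.
have := h (invmx A *m y); rewrite mulKVmx // => hh.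
by rewrite mulrC ler_pdivlMr // mulrC.
Qed.

Lemma lb_of_quad {n} (A : 'M[R]_n) c : 0 <= c -> (forall x, c * dot x x <= dot x (A *m x)) -> lb A c.
Proof.
move=> c0 h x; have := h x; rewrite -vnorm_sq => hx.
have := le_trans hx (CS_norm _ _) => hh.
have [zz|zp] := eqVneq (vnorm x) 0; first by rewrite zz mulr0 vnorm_ge0.
have zpos : 0 < vnorm x by rewrite lt0r zp vnorm_ge0.
by move: hh; rewrite expr2 mulrA (mulrC _ (vnorm x)) ler_pM2l.
Qed.

Lemma unorm {n k} (U : 'M[R]_(n, k)) : U^T *m U = 1%:M -> forall x, vnorm (U *m x) = vnorm x.
Proof. by move=> h x; rewrite !vnormE dot_mul mulmxA h mul1mx. Qed.

Lemma bnd_spec {m n} (A : 'M[R]_(m, n)) : bnd A (spec_norm A).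
Proof.
set S := [set vnorm (A *m x) | x in [set x : 'cV[R]_n | vnorm x <= 1]].
have hs : has_sup S.
  split; first by exists 0, 0; rewrite /= ?vnorm0 ?mulmx0 ?vnorm0.
  exists (Num.sqrt (\sum_i dot (row i A)^T (row i A)^T)) => _ [x /= x1 <-].
  apply: vnorm_le; first exact: sqrtr_ge0.
  rewrite sqr_sqrtr ?sumr_ge0 // ?dotE; last by move=> i _; exact: dot_ge0.
  apply: ler_sum => i _.
  have -> : (A *m x) i 0 = dot (row i A)^T x.
    by rewrite dotE mxE; apply: eq_bigr => j _; rewrite !mxE.
  apply: le_trans (CS _ _) _; apply: ler_piMr; first exact: dot_ge0.
  rewrite -vnorm_sq; have := vnorm_ge0 x; nra.
move=> x; have [x0|xn0] := eqVneq (vnorm x) 0.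
  by rewrite x0 (vnorm_eq0 _ x0) mulmx0 vnorm0 mulr0.
have xp : 0 < vnorm x by rewrite lt0r xn0 vnorm_ge0.
have : S (vnorm (A *m ((vnorm x)^-1 *: x))).
  exists ((vnorm x)^-1 *: x) => //=.
  by rewrite vnormZ ger0_norm ?invr_ge0 ?vnorm_ge0 // mulVf.
move=> /(sup_upper_bound hs); rewrite -scalemxAr vnormZ ger0_norm ?invr_ge0 ?vnorm_ge0 //.
by rewrite mulrC ler_pdivrMr.
Qed.

Lemma spec_le {m n} (A : 'M[R]_(m, n)) c : 0 <= c -> bnd A c -> spec_norm A <= c.
Proof.
move=> c0 h; apply: ge_sup; first by exists 0, 0; rewrite /= ?vnorm0 ?mulmx0 ?vnorm0.
move=> _ [x /= x1 <-]; apply: le_trans (h x) _; by rewrite ler_piMr.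
Qed.

Lemma sigma_ge0 {m n} (A : 'M[R]_(m, n)) : 0 <= sigma_min A.
Proof.
rewrite /sigma_min; set S := [set _ | _ in _].
have [->|ne] := eqVneq S set0; first by rewrite inf0.
apply: lb_le_inf; first exact/set0P.
by move=> _ [x _ <-]; exact: vnorm_ge0.
Qed.

Lemma sigma_lb {m n} (A : 'M[R]_(m, n)) x : sigma_min A * vnorm x <= vnorm (A *m x).
Proof.
have [x0|xn0] := eqVneq (vnorm x) 0; first by rewrite x0 mulr0 vnorm_ge0.
have xp : 0 < vnorm x by rewrite lt0r xn0 vnorm_ge0.
have hl : has_lbound [set vnorm (A *m x) | x in [set x : 'cV[R]_n | vnorm x = 1]].
  by exists 0 => _ [y _ <-]; exact: vnorm_ge0.
have := ge_inf hl; move=> /(_ (vnorm (A *m ((vnorm x)^-1 *: x)))) h.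
have : sigma_min A <= vnorm (A *m ((vnorm x)^-1 *: x)).
  apply: h; exists ((vnorm x)^-1 *: x) => //=.
  by rewrite vnormZ ger0_norm ?invr_ge0 ?vnorm_ge0 // mulVf.
rewrite -scalemxAr vnormZ ger0_norm ?invr_ge0 ?vnorm_ge0 //.
by rewrite mulrC ler_pdivlMr.
Qed.


Lemma dotNl {n} (u v : 'cV[R]_n) : dot (- u) v = - dot u v.
Proof. by rewrite dotC dotNr dotC. Qed.

Lemma main_det {p q} (B C : 'M[R]_(q, p)) (M : 'M[R]_q) e1 e2 s :
  0 < e1 < 1/2 -> 0 < e2 -> 0 <= s -> bnd B 1 -> bnd (M - 1%:M) e1 ->
  bnd (C - B) e2 -> (forall x, s * vnorm x <= vnorm (B *m x)) ->
  2 * f1 e1 e2 <= s ^+ 2 ->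
  bnd (invmx (C^T *m invmx M *m C) - invmx (B^T *m B)) (2 * f1 e1 e2 / s ^+ 4).
Proof.
move=> /andP[e1p e1h] e2p s0 bB bM bCB hs hf.
have e1n : 1 - e1 != 0 by apply: lt0r_neq0; lra.
have f1p : 0 < f1 e1 e2.
  rewrite /f1 divr_gt0 //; last lra.
  by rewrite ltr_wpDr // mulr_ge0 //; lra.
have sp : 0 < s.
  rewrite lt0r s0 andbT; apply/negP => /eqP s00; move: hf; rewrite s00; nra.
have lbM : lb M (1 - e1).
  move=> x; have e : x = M *m x - (M - 1%:M) *m x by rewrite mulmxBl mul1mx opprB addrC subrK.
  have := vnormD (M *m x) (- ((M - 1%:M) *m x)); rewrite -e vnormN => h.
  have := bM x; rewrite mulrBl mul1r; lra.
have uM : M \in unitmx by apply: (lb_unit M (1 - e1)) => //; lra.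
have bMi : bnd (invmx M) (1 - e1)^-1 by apply: lb_inv => //; lra.
have bMi1 : bnd (invmx M - 1%:M) ((1 - e1)^-1 * e1).
  have -> : invmx M - 1%:M = invmx M *m (- (M - 1%:M)).
    by rewrite mulmxN mulmxBr mulVmx // mulmx1 opprB.
  by apply: bndM; [rewrite invr_ge0; lra | exact: bMi | exact: bndN].
have bC : bnd C (1 + e2).
  have -> : C = B + (C - B) by rewrite addrC subrK.
  exact: bndD.
have bCT : bnd C^T (1 + e2) by apply: bndT => //; lra.
have bCBT : bnd (C - B)^T e2 by apply: bndT => //; lra.
have bBT : bnd B^T 1 by apply: bndT.
set D := C^T *m invmx M *m C - B^T *m B.
have eD : D = C^T *m (invmx M - 1%:M) *m C + ((C - B)^T *m C + B^T *m (C - B)).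
  rewrite /D mulmxBr mulmx1 mulmxBl linearB /= !mulmxBl !mulmxBr.
  by rewrite !addrA subrK addrNK.
have bD : bnd D (f1 e1 e2).
  rewrite eD; apply: (@bnd_mono _ _ _ ((1 + e2) * ((1 - e1)^-1 * e1) * (1 + e2) + (e2 * (1 + e2) + 1 * e2))).
    rewrite le_eqVlt; apply/orP; left; apply/eqP; rewrite /f1; field => //.
  apply: bndD; first apply: bndM.
  - apply: mulr_ge0; [lra | apply: mulr_ge0; [rewrite invr_ge0; lra | lra]].
  - apply: bndM => //; lra.
  - exact: bC.
  apply: bndD; apply: bndM => //; lra.
set Ah := B^T *m B.
have qAh : forall x, s ^+ 2 * dot x x <= dot x (Ah *m x).
  move=> x; rewrite /Ah -mulmxA dot_mul trmxK -!vnorm_sq -exprMn.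
  by rewrite lerXn2r // ?nnegrE ?mulr_ge0 ?vnorm_ge0.
have lbAh : lb Ah (s ^+ 2) by apply: lb_of_quad => //; rewrite sqr_ge0.
have eAt : C^T *m invmx M *m C = Ah + D by rewrite /D addrC subrK.
have lbAt : lb (C^T *m invmx M *m C) (s ^+ 2 / 2).
  apply: lb_of_quad; first by rewrite divr_ge0 ?sqr_ge0.
  move=> x; rewrite eAt mulmxDl dotDr.
  have h1 := qAh x.
  have h2 := CS_norm (- x) (D *m x); rewrite dotNl in h2.
  have h3 := bD x; have h4 := vnorm_sq x; have h5 := vnorm_ge0 x.
  have h6 := vnorm_ge0 (- x); rewrite vnormN in h6 h2.
  have h7 := vnorm_ge0 (D *m x).
  have h8 : vnorm x * vnorm (D *m x) <= vnorm x * (f1 e1 e2 * vnorm x) by rewrite ler_wpM2l.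
  rewrite -h4; nra.
have hs2 : 0 < s ^+ 2 by rewrite exprn_gt0.
have hs22 : 0 < s ^+ 2 / 2 by rewrite divr_gt0.
have bAti := lb_inv _ _ hs22 lbAt.
have bAhi := lb_inv _ _ hs2 lbAh.
have uAt : C^T *m invmx M *m C \in unitmx by apply: (lb_unit _ (s ^+ 2 / 2)) => //; rewrite divr_gt0 ?exprn_gt0.
have uAh : Ah \in unitmx by apply: (lb_unit _ (s ^+ 2)) => //; rewrite exprn_gt0.
have -> : invmx (C^T *m invmx M *m C) - invmx Ah =
   invmx (C^T *m invmx M *m C) *m (- D) *m invmx Ah.
  rewrite /D opprB mulmxBr mulVmx //.
  by rewrite mulmxBl mul1mx -(mulmxA (invmx _) (B^T *m B)) -/Ah mulmxV // mulmx1.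
apply: (@bnd_mono _ _ _ ((s ^+ 2 / 2)^-1 * f1 e1 e2 * (s ^+ 2)^-1)).
  rewrite le_eqVlt; apply/orP; left; apply/eqP; field.
  by rewrite lt0r_neq0.
apply: bndM; first by apply: mulr_ge0; [rewrite invr_ge0 divr_ge0 ?sqr_ge0 | exact: ltW].
  apply: bndM; first by rewrite invr_ge0 divr_ge0 ?sqr_ge0.
    exact: bAti.
  exact: bndN.
exact: bAhi.
Qed.

End Aux.

Theorem lemmaB6 (R : realType) (n p q m : nat)
  (y : 'cV[R]_n) (X : 'M[R]_(n, p)) (Z : 'M[R]_(n, q))
  (UX : 'M[R]_(n, p)) (SX : 'M[R]_p) (VX : 'M[R]_p)
  (UZ : 'M[R]_(n, q)) (SZ : 'M[R]_q) (VZ : 'M[R]_q)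
  (hZZ : Z^T *m Z \in unitmx)
  (hXPX : X^T *m projmx Z *m X \in unitmx)
  (hsvdX : thin_svd X UX SX VX) (hsvdZ : thin_svd Z UZ SZ VZ)
  (d : measure_display) (T : measurableType d) (P : probability T R)
  (Pi : T -> 'M[R]_(m, n))
  (e1 e2 e3 delta : R)
  (he1 : 0 < e1 < 1/2) (he2 : 0 < e2 < 1/2) (he3 : 0 < e3 < 1/2)
  (hdelta : 0 < delta < 1/2) :
  let beta := invmx (X^T *m projmx Z *m X) *m X^T *m projmx Z *m y in
  let e := y - X *m beta in
  let S := fun w => (Pi w)^T *m Pi w in
  (exists E : set T, [/\ measurable E, ((1 - delta)%:E <= P E)%E &
     forall w, E w ->
       [/\ spec_norm (UZ^T *m S w *m UZ - 1%:M) <= e1,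
           spec_norm (UZ^T *m S w *m UX - UZ^T *m UX) <= e2 &
           vnorm (UZ^T *m S w *m e - UZ^T *m e) <= e3 * vnorm e]]) ->
  sigma_min (UZ^T *m UX) ^+ 2 >= 2 * f1 e1 e2 ->
  let Ahat := UX^T *m UZ *m UZ^T *m UX in
  let Atil := fun w => UX^T *m S w *m UZ *m invmx (UZ^T *m S w *m UZ)
                        *m UZ^T *m S w *m UX in
  exists F : set T, [/\ measurable F, ((1 - delta)%:E <= P F)%E &
    forall w, F w ->
      spec_norm (invmx (Atil w) - invmx Ahat)
        <= 2 * f1 e1 e2 / sigma_min (UZ^T *m UX) ^+ 4].
Proof.
move=> beta e S [E [mE PE HE]] hs Ahat Atil.
exists E; split => // w /HE [h1 h2 _].
case: hsvdX => _ UXo _ _ _; case: hsvdZ => _ UZo _ _ _.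
have e1p : 0 < e1 < 1/2 by [].
have e2p : 0 < e2 by case/andP: he2.
have s0 := sigma_ge0 (UZ^T *m UX).
have eAt : Atil w = (UZ^T *m S w *m UX)^T *m invmx (UZ^T *m S w *m UZ) *m (UZ^T *m S w *m UX).
  by rewrite /Atil /S !trmx_mul !trmxK !mulmxA.
have eAh : Ahat = (UZ^T *m UX)^T *m (UZ^T *m UX).
  by rewrite /Ahat trmx_mul trmxK !mulmxA.
have bUX : bnd UX 1 by move=> x; rewrite (unorm _ UXo) mul1r.
have bUZ : bnd UZ 1 by move=> x; rewrite (unorm _ UZo) mul1r.
have bB : bnd (UZ^T *m UX) 1.
  apply: (@bnd_mono _ _ _ _ (1 * 1)); first by rewrite mulr1.
  apply: bndM => //; exact: bndT.
have f1p : 0 <= f1 e1 e2.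
  rewrite /f1 divr_ge0 //; case/andP: he1 => a b; case/andP: he2 => c dd; nra.
have hmain := main_det _ _ _ _ _ _ e1p e2p s0 bB (bnd_mono _ _ _ h1 (bnd_spec _)) (bnd_mono _ _ _ h2 (bnd_spec _))
  (sigma_lb _) hs.
rewrite eAt eAh; apply: spec_le => //.
by rewrite divr_ge0 ?exprn_ge0 // mulr_ge0.
Qed.
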